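(* Let $X$ be a Hausdorff space without isolated points. If \textsc{Bob} has a winning strategy in the game $\mathsf{BM}_\mathrm{fin}(X)$, then $X$ is productively Baire.
   Context: The game $\mathsf{BM}_\mathrm{fin}(X)$ on a topological space $X$ is played by \textsc{Alice} and \textsc{Bob} as follows. \textsc{Alice} plays a non-empty open set $A_0$; \textsc{Bob} plays a finite collection $\mathcal{B}_0$ of non-empty open subsets of $A_0$. In inning $n+1$, for each $B \in \mathcal{B}_n$ \textsc{Alice} plays a non-empty open set $A_B \subseteq B$; let $\mathcal{A}_{n+1}=\{A_B : B\in\mathcal{B}_n\}$; then \textsc{Bob} plays a finite collection $\mathcal{B}_{n+1}$ of non-empty open subsets of $\bigcup\mathcal{A}_{n+1}$. Put $B_n=\bigcup\mathcal{B}_n$. \textsc{Bob} wins the play if $\bigcap_{n\in\omega}B_n\neq\emptyset$; otherwise \textsc{Alice} wins. A Baire space is a space in which countable intersections of dense open sets are dense. A Baire space $X$ is productively Baire if $X\times Y$ is Baire for every Baire space $Y$. *)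

(* Defs.v *)
From HB Require Import structures.
From mathcomp Require Import all_boot all_order all_algebra.
From mathcomp Require Import all_classical all_reals all_analysis.
Set Implicit Arguments. Unset Strict Implicit. Unset Printing Implicit Defensive.
Import Order.TTheory GRing.Theory Num.Theory.
Local Open Scope classical_set_scope.

Definition baire_space (T : topologicalType) : Prop :=
  forall F : (set T)^nat, (forall i, open (F i) /\ dense (F i)) ->
    dense (\bigcap_i F i).

Definition productively_baire (X : topologicalType) : Prop :=
  baire_space X /\ forall Y : topologicalType, baire_space Y -> baire_space (X * Y)%type.

(* A finite collection of open sets is represented by a list; a move of
   Alice in inning 0 is the singleton list [:: A_0]; a move of Alice in
   inning n+1 is the list [:: A_B | B in Bob's previous list] (same length,
   entrywise A_B ⊆ B, and equal B's receive equal A_B). *)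
Definition bigU (X : topologicalType) (s : seq (set X)) : set X :=
  [set x | exists2 i, (i < size s)%N & nth set0 s i x].

Definition alice_start_ok (X : topologicalType) (a0 : seq (set X)) : Prop :=
  exists A0, a0 = [:: A0] /\ open A0 /\ A0 !=set0.

Definition bob_ok (X : topologicalType) (al bl : seq (set X)) : Prop :=
  forall i, (i < size bl)%N ->
    open (nth set0 bl i) /\ nth set0 bl i !=set0 /\ nth set0 bl i `<=` bigU al.

Definition alice_ok (X : topologicalType) (bl al : seq (set X)) : Prop :=
  size al = size bl /\
  (forall i, (i < size bl)%N ->
    open (nth set0 al i) /\ nth set0 al i !=set0 /\ nth set0 al i `<=` nth set0 bl i) /\
  (forall i j, (i < size bl)%N -> (j < size bl)%N ->
    nth set0 bl i = nth set0 bl j -> nth set0 al i = nth set0 al j).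

(* A strategy for Bob maps the list of Alice's moves so far
   [:: a_0; ...; a_n] to Bob's move B_n. *)
Definition bob_strategy (X : topologicalType) := seq (seq (set X)) -> seq (set X).

Definition bob_winning (X : topologicalType) (sigma : bob_strategy X) : Prop :=
  forall a : nat -> seq (set X), alice_start_ok (a 0%N) ->
    let b := fun n => sigma (mkseq a n.+1) in
    (forall n, (forall k, (k < n)%N -> alice_ok (b k) (a k.+1)) -> bob_ok (a n) (b n)) /\
    ((forall n, alice_ok (b n) (a n.+1)) -> (\bigcap_n bigU (b n)) !=set0).

Definition bob_has_winning_strategy (X : topologicalType) : Prop :=
  exists sigma : bob_strategy X, bob_winning sigma.

(* Main.v *)
Require Import Defs.
From HB Require Import structures.
From mathcomp Require Import all_boot all_order all_algebra.
From mathcomp Require Import all_classical all_reals all_analysis.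
Local Open Scope classical_set_scope.


Lemma open_setX' (X Y : topologicalType) (A : set X) (B : set Y) :
  open A -> open B -> open (A `*` B).
Proof.
move=> oA oB; rewrite openE => -[x y] [/= Ax By].
exists (A, B); last by [].
by split; apply: open_nbhs_nbhs; split.
Qed.

Lemma open_rect (X Y : topologicalType) (W : set (X * Y)) (z : X * Y) :
  open W -> W z -> exists P Q, [/\ open P, open Q, P z.1, Q z.2 & P `*` Q `<=` W].
Proof.
rewrite openE => oW Wz; have [[P Q] [nP nQ] PQW] := oW _ Wz.
move: nP nQ; rewrite !nbhsE => -[P' [oP' P'z] P'P] [Q' [oQ' Q'z] Q'Q].
exists P', Q'; split => // -[a b] [/= ? ?]; apply: PQW; split; [exact: P'P|exact: Q'Q].
Qed.

Lemma take_mkseq_nth (T : Type) (x0 : T) (s : seq T) m :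
  (m <= size s)%N -> take m s = mkseq (nth x0 s) m.
Proof.
move=> ms; apply: (@eq_from_nth _ x0); first by rewrite size_takel // size_mkseq.
move=> i; rewrite size_takel // => im.
by rewrite nth_take // nth_mkseq.
Qed.

Lemma fin_constr (X Y : topologicalType) (G0 : set (X * Y)) (W : set Y)
  (bl : seq (set X)) :
  open G0 -> dense G0 -> open W -> W !=set0 ->
  (forall i, (i < size bl)%N -> open (nth set0 bl i) /\ nth set0 bl i !=set0) ->
  exists (f : set X -> set X) (W' : set Y),
    [/\ open W', W' !=set0, W' `<=` W &
     forall i, (i < size bl)%N ->
       [/\ open (f (nth set0 bl i)), f (nth set0 bl i) !=set0,
           f (nth set0 bl i) `<=` nth set0 bl i &
           f (nth set0 bl i) `*` W' `<=` G0]].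
Proof.
move=> oG dG; elim: bl W => [|B bl IH] W oW nW hbl.
  by exists id, W; split.
have [f1 [W1 [oW1 nW1 W1W hf1]]] := IH W oW nW (fun i hi => hbl i.+1 hi).
have [oB nB] := hbl 0%N isT.
have oBW : open (B `*` W1) by apply: open_setX'.
have nBW : (B `*` W1) !=set0.
  by case: nB => x Bx; case: nW1 => y Wy; exists (x, y).
have [[x y] [[/= Bx Wy] Gxy]] := dG _ nBW oBW.
have oI : open ((B `*` W1) `&` G0) by apply: openI.
have [P [Q [oP oQ /= Px Qy PQ]]] := open_rect _ _ _ (x, y) oI (conj (conj Bx Wy) Gxy).
pose A := P `&` B.
exists (fun C => if pselect (C = B) then A else f1 C), (Q `&` W1).
split.
- exact: openI.
- by exists y.
- by move=> t [_ /W1W].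
move=> [|i] /= hi.
  case: (pselect (B = B)) => [e|//] /=; split.
  - exact: openI.
  - by exists x.
  - by move=> t [].
  by move=> [a b] [[/= Pa _] [Qb _]]; have [] := PQ (a, b) (conj Pa Qb).
case: (pselect (nth set0 bl i = B)) => [e|ne] /=.
  rewrite e.
  split.
  - exact: openI.
  - by exists x.
  - by move=> t [].
  by move=> [a b] [[/= Pa _] [Qb _]]; have [] := PQ (a, b) (conj Pa Qb).
have [h1 h2 h3 h4] := hf1 i hi; split => //.
by move=> [a b] [/= fa [_ Wb]]; apply: h4.
Qed.
Set Implicit Arguments. Unset Strict Implicit.

Definition play_ok (X : topologicalType) (sigma : bob_strategy X)
  (s : seq (seq (set X))) :=
  [/\ (0 < size s)%N, alice_start_ok (nth [::] s 0) &
   forall k, (k.+1 < size s)%N -> alice_ok (sigma (take k.+1 s)) (nth [::] s k.+1)].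

Lemma bob_legal (X : topologicalType) (sigma : bob_strategy X) :
  bob_winning sigma -> forall s, play_ok sigma s ->
  bob_ok (nth [::] s (size s).-1) (sigma s).
Proof.
move=> hw s [s0 st hk].
move: (hw (nth [::] s) st) => /= [h1 _].
have := h1 (size s).-1; rewrite prednK // mkseq_nth; apply => k kn.
have ks : (k.+1 < size s)%N by rewrite -(prednK s0) ltnS.
by rewrite -take_mkseq_nth; [exact: hk | exact: ltnW].
Qed.

Lemma play_rcons (X : topologicalType) (sigma : bob_strategy X) s a' :
  play_ok sigma s -> alice_ok (sigma s) a' -> play_ok sigma (rcons s a').
Proof.
move=> [s0 st hk] ha; split.
- by rewrite size_rcons.
- by rewrite nth_rcons s0.
move=> k; rewrite size_rcons ltnS leq_eqVlt => /orP[/eqP ks|ks].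
  by rewrite -cats1 takel_cat ks ?take_size // nth_cat ltnn subnn.
by rewrite -cats1 takel_cat ?(ltnW ks) // nth_cat ks; apply: hk.
Qed.

Definition child (X Y : topologicalType) (sigma : bob_strategy X)
  (G : set (X * Y)) (p c : seq (seq (set X)) * set Y) :=
  exists a', [/\ c.1 = rcons p.1 a', alice_ok (sigma p.1) a', open c.2,
    c.2 !=set0 & c.2 `<=` p.2 /\
    forall i, (i < size a')%N -> nth set0 a' i `*` c.2 `<=` G].

Definition Mx (X Y : topologicalType) (sigma : bob_strategy X)
  (G : set (X * Y)) (p : seq (seq (set X)) * set Y) :=
  proj1_sig (ex_maximal_disjoint_subcollection snd (child sigma G p)).

Lemma MxP (X Y : topologicalType) (sigma : bob_strategy X) G p :
  maximal_disjoint_subcollection snd (@Mx X Y sigma G p) (child sigma G p).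
Proof. rewrite /Mx; case: ex_maximal_disjoint_subcollection => /= E hE; exact: hE. Qed.

Fixpoint Lv (X Y : topologicalType) (sigma : bob_strategy X)
  (G : nat -> set (X * Y)) (U : set X) (V : set Y) (n : nat) :
  set (seq (seq (set X)) * set Y) :=
  match n with
  | 0 => [set ([:: [:: U]], V)]
  | n.+1 => \bigcup_(p in Lv sigma G U V n) Mx sigma (G n) p
  end.

Lemma Lv_inv (X Y : topologicalType) (sigma : bob_strategy X) (G : nat -> set (X * Y)) (U : set X) (V : set Y) :
  open U -> U !=set0 -> open V -> V !=set0 ->
  forall n p, Lv sigma G U V n p ->
  [/\ size p.1 = n.+1, play_ok sigma p.1, open p.2 & p.2 !=set0].
Proof.
move=> oU nU oV nV; elim=> [|n IH] p /=.
  move=> ->; split => //=; split => //; by exists U.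
move=> [q /IH [sq pq oq nq] Mp].
have [/(_ _ Mp) [a' [-> ha o2 n2 _]] _ _] := MxP sigma (G n) q.
split => //; first by rewrite size_rcons sq.
exact: play_rcons.
Qed.

Lemma child_ex (X Y : topologicalType) (sigma : bob_strategy X) (G : nat -> set (X * Y)) (U : set X) (V : set Y) :
  bob_winning sigma -> (forall n, open (G n) /\ dense (G n)) ->
  open U -> U !=set0 -> open V -> V !=set0 ->
  forall n p, Lv sigma G U V n p -> forall O, open O -> O `&` p.2 !=set0 ->
  exists c, child sigma (G n) p c /\ c.2 `<=` O.
Proof.
move=> hw hG oU nU oV nV n p Lp O oO nO.
have [_ pp op _] := Lv_inv oU nU oV nV Lp.
have hb := bob_legal hw pp.
have [f [W' [oW' nW' W'O hf]]] := @fin_constr X Y (G n) (O `&` p.2) (sigma p.1)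
  (hG n).1 (hG n).2 (openI oO op) nO (fun i hi => let: (conj a (conj b _)) := hb i hi in conj a b).
exists (rcons p.1 (map f (sigma p.1)), W'); split; last by move=> t /W'O [].
exists (map f (sigma p.1)); split => //=.
- split; first by rewrite size_map.
  split.
    move=> i hi; rewrite (nth_map set0) //.
    by have [? ? ? _] := hf i hi.
  by move=> i j hi hj e; rewrite !(nth_map set0) // e.
split; first by move=> t /W'O [].
move=> i; rewrite size_map => hi; rewrite (nth_map set0) //.
by have [_ _ _ ?] := hf i hi.
Qed.

Definition Dn (X Y : topologicalType) (sigma : bob_strategy X)
  (G : nat -> set (X * Y)) (U : set X) (V : set Y) n : set Y :=
  \bigcup_(p in Lv sigma G U V n) p.2.

Lemma Dn_step (X Y : topologicalType) (sigma : bob_strategy X)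
  (G : nat -> set (X * Y)) (U : set X) (V : set Y) :
  bob_winning sigma -> (forall n, open (G n) /\ dense (G n)) ->
  open U -> U !=set0 -> open V -> V !=set0 ->
  forall n O, open O -> O `&` Dn sigma G U V n !=set0 ->
  O `&` Dn sigma G U V n.+1 !=set0.
Proof.
move=> hw hG oU nU oV nV n O oO [y [Oy [p Lp py]]].
have [c [cc cO]] := child_ex hw hG oU nU oV nV Lp oO (ex_intro _ y (conj Oy py)).
have [Msub Mtriv Mmax] := MxP sigma (G n) p.
have [a' [_ _ _ [z cz] [c2p _]]] := cc.
apply: contrapT => hno.
have disj : forall q, Mx sigma (G n) p q -> ~ (q.2 `&` c.2 !=set0).
  move=> q Mq [t [qt ct]]; apply: hno; exists t; split; first exact: cO.
  by exists q => //; exists p.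
have cM : ~ Mx sigma (G n) p c by move=> Mc; apply: (disj c Mc); exists z.
apply: (Mmax (Mx sigma (G n) p `|` [set c])).
- split; first by move=> q Mq; left.
  by move=> h; apply: cM; apply: h; right.
- by move=> q [/Msub //|->].
move=> i j [Mi|->] [Mj|->] hij.
- exact: Mtriv.
- by exfalso; apply: (disj i Mi).
- by exfalso; apply: (disj j Mj); rewrite setIC.
- by [].
Qed.

Lemma Lv_disj (X Y : topologicalType) (sigma : bob_strategy X)
  (G : nat -> set (X * Y)) (U : set X) (V : set Y) :
  forall n p q, Lv sigma G U V n p -> Lv sigma G U V n q ->
  p.2 `&` q.2 !=set0 -> p = q.
Proof.
elim=> [|n IH] p q /=; first by move=> -> ->.
move=> [p' Lp' Mp] [q' Lq' Mq] [t [pt qt]].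
have [Msub _ _] := MxP sigma (G n) p'.
have [a [_ _ _ _ [pp' _]]] := Msub _ Mp.
have [Msub' _ _] := MxP sigma (G n) q'.
have [b [_ _ _ _ [qq' _]]] := Msub' _ Mq.
have e : p' = q' by apply: IH => //; exists t; split; [exact: pp'|exact: qq'].
subst q'.
have [_ Mtriv _] := MxP sigma (G n) p'.
by apply: Mtriv => //; exists t.
Qed.

Lemma core (X Y : topologicalType) (sigma : bob_strategy X)
  (G : nat -> set (X * Y)) (U : set X) (V : set Y) :
  bob_winning sigma -> (forall n, open (G n) /\ dense (G n)) -> baire_space Y ->
  open U -> U !=set0 -> open V -> V !=set0 ->
  exists z, [/\ U z.1, V z.2 & forall n, G n z].
Proof.
move=> hw hG hY oU nU oV nV.
pose D := Dn sigma G U V.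
have oD : forall n, open (D n).
  move=> n; apply: bigcup_open => p Lp.
  by have [] := Lv_inv oU nU oV nV Lp.
have dD : forall n O, open O -> O `&` V !=set0 -> O `&` D n !=set0.
  move=> n O oO hO; elim: n => [|n IH].
    case: hO => y [Oy Vy]; exists y; split => //.
    by exists ([:: [:: U]], V).
  exact: Dn_step.
pose F n := D n `|` ~` closure V.
have dF : dense (\bigcap_n F n).
  apply: hY => n; split.
    apply: openU; first exact: oD.
    by rewrite openC; exact: closed_closure.
  move=> O nO oO.
  have [h|h] := pselect (O `&` V !=set0).
    by have [y [Oy Dy]] := dD n O oO h; exists y; split => //; left.
  case: nO => y Oy; exists y; split => //; right => cy; apply: h.
  have [t [Vt Ot]] := cy O (open_nbhs_nbhs (conj oO Oy)).
  by exists t.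
have [y [Vy Fy]] := dF V nV oV.
have Dy : forall k, D k y.
  by move=> k; case: (Fy k I) => // /(_ (subset_closure Vy)).
have hex : forall k, exists p, Lv sigma G U V k p /\ p.2 y.
  by move=> k; have [p Lp py] := Dy k; exists p.
have [pk hpk] := choice hex.
have Lk : forall k, Lv sigma G U V k (pk k) by move=> k; have [] := hpk k.
have yk : forall k, (pk k).2 y by move=> k; have [] := hpk k.
have chain : forall k, child sigma (G k) (pk k) (pk k.+1).
  move=> k; have [q Lq Mq] := Lk k.+1.
  have [Msub _ _] := MxP sigma (G k) q.
  have cq := Msub _ Mq.
  have [a [_ _ _ _ [sq _]]] := cq.
  have e : q = pk k.
    by apply: (Lv_disj Lq (Lk k)); exists y; split; [exact: sq|].
  by rewrite -e.
have e0 : pk 0%N = ([:: [:: U]], V) by exact: (Lk 0%N).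
pose a k := nth [::] (pk k).1 k.
have ha : forall k, exists a', [/\ (pk k.+1).1 = rcons (pk k).1 a', a k.+1 = a',
    alice_ok (sigma (pk k).1) a', (pk k.+1).2 `<=` (pk k).2 &
    forall i, (i < size a')%N -> nth set0 a' i `*` (pk k.+1).2 `<=` G k].
  move=> k; have [a' [h1 h2 _ _ [h3 h4]]] := chain k.
  exists a'; split => //.
  have [sk _ _ _] := Lv_inv oU nU oV nV (Lk k).
  by rewrite /a h1 nth_rcons sk ltnn eqxx.
have hm : forall k, mkseq a k.+1 = (pk k).1.
  elim=> [|k IH]; first by rewrite /mkseq /= /a e0.
  rewrite mkseqS IH; have [a' [h1 h2 _ _ _]] := ha k.
  by rewrite h1 h2.
have st : alice_start_ok (a 0%N) by rewrite /a e0; exists U.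
move: (hw a st) => /= [h1 h2].
have hall : forall n, alice_ok (sigma (mkseq a n.+1)) (a n.+1).
  by move=> n; rewrite hm; have [a' [_ -> ? _ _]] := ha n.
have bo : forall n, bob_ok (a n) (sigma (mkseq a n.+1)).
  by move=> n; apply: h1 => k _; exact: hall.
have [x xcap] := h2 hall.
exists (x, y); split => /=.
- have [i hi bx] := xcap 0%N I.
  have [_ [_ sub]] := bo 0%N i hi.
  have [j hj] := sub x bx.
  move: hj; rewrite /a e0 /=; case: j => [|j] //.
- by have := yk 0%N; rewrite e0.
move=> n.
have [i hi bx] := xcap n.+1 I.
have [_ [_ sub]] := bo n.+1 i hi.
have [j hj ajx] := sub x bx.
have [a' [_ ea _ _ hG']] := ha n.
rewrite ea in hj ajx.
by apply: (hG' j hj); split => //; exact: yk.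
Qed.
Unset Implicit Arguments. Set Strict Implicit.

Lemma baire_prod (X Y : topologicalType) (sigma : bob_strategy X) :
  bob_winning sigma -> baire_space Y -> baire_space (X * Y)%type.
Proof.
move=> hw hY F hF O [z Oz] oO.
have [P [Q [oP oQ Pz Qz PQ]]] := open_rect _ _ O z oO Oz.
have [w [Pw Qw Fw]] := core hw hF hY oP (ex_intro _ _ Pz) oQ (ex_intro _ _ Qz).
exists w; split; first by apply: PQ; case: w Pw Qw Fw.
by move=> n _; apply: Fw.
Qed.

Lemma baire_bool : baire_space bool.
Proof.
move=> F hF O [b Ob] oO; exists b; split => // n _.
have [b' [/= -> Fb]] := (hF n).2 [set b] (ex_intro _ b erefl) (discrete_open _).
exact: Fb.
Qed.

Lemma baire_X (X : topologicalType) (sigma : bob_strategy X) :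
  bob_winning sigma -> baire_space X.
Proof.
move=> hw F hF O [z Oz] oO.
pose G n : set (X * bool) := F n `*` setT.
have hG : forall n, open (G n) /\ dense (G n).
  move=> n; split; first by apply: open_setX'; [exact: (hF n).1 | exact: openT].
  move=> W [w Ww] oW.
  have [P [Q [oP oQ Pw Qw PQ]]] := open_rect _ _ W w oW Ww.
  have [x [Px Fx]] := (hF n).2 P (ex_intro _ _ Pw) oP.
  by exists (x, w.2); split; [apply: PQ|].
have [w [Ow _ Gw]] := core hw hG baire_bool oO (ex_intro _ _ Oz) openT (ex_intro _ true I).
exists w.1; split => // n _; by have [] := Gw n.
Qed.

Theorem proposition2p3 (X : topologicalType) :
  hausdorff_space X -> isolated [set: X] = set0 ->
  bob_has_winning_strategy X -> productively_baire X.
Proof.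
move=> _ _ [sigma hw]; split; first exact: baire_X hw.
by move=> Y hY; exact: baire_prod hw hY.
Qed.
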